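(* Let $N>0$, $m>0$, $F>0$, $\alpha>0$, $w>0$ be fixed with $Nm>\alpha$, and for $g\geq 0$, $\tau\in(0,1)$, $L_g\geq 0$ define \[ L=\frac{N\left[(1-\tau)(mL_g+\alpha F)+(mg+F)mN\right]}{\alpha+(Nm-\alpha)\tau},\qquad q=\frac{(1-\tau)(L+L_g-\alpha g)}{\left(Nm+\alpha(1-\tau)\right)(L+L_g)}, \] \[ p=\frac{L+L_g}{L+L_g-\alpha g}\left(mw+\frac{\alpha(1-\tau)w}{N}\right),\qquad \Pi=\left((L+L_g)q+g\right)(p-mw)-Fw, \] regarded as functions of $(g,\tau,L_g)$, and let \[ \Lambda=(1-Nmq)\left(\frac{Nm}{1-\tau}+2\alpha\right)g-N(mg+F). \] Then at any point $(g,\tau,L_g)$: $\frac{\partial \Pi}{\partial L_g}<0$ if $L_g<\Lambda$; $\frac{\partial \Pi}{\partial L_g}=0$ if $L_g=\Lambda$; and $\frac{\partial \Pi}{\partial L_g}>0$ if $L_g>\Lambda$.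
   Context: These are the symmetric-equilibrium private employment $L$, per-capita consumption $q$ of each variety, price $p$, and profit $\Pi$ of each firm in a monopolistic-competition general equilibrium model with a measure $N$ of firms, marginal and fixed labor inputs $m$ and $F$, CARA utility parameter $\alpha$, nominal wage $w$, income tax rate $\tau$, government purchase $g$ of each variety, and government employment $L_g$. Here $\Lambda$ is evaluated at the same point (with $q$ the equilibrium value there). Partial derivatives are taken in $(g,\tau,L_g)$ with other parameters fixed. *)

(* Defs.v *)
From Stdlib Require Import Reals.
From Coquelicot Require Import Coquelicot.
Open Scope R_scope.

Definition Lpriv (N m F alpha : R) (g tau Lg : R) : R :=
  N * ((1 - tau) * (m * Lg + alpha * F) + (m * g + F) * m * N)
  / (alpha + (N * m - alpha) * tau).

Definition qeq (N m F alpha : R) (g tau Lg : R) : R :=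
  let L := Lpriv N m F alpha g tau Lg in
  (1 - tau) * (L + Lg - alpha * g)
  / ((N * m + alpha * (1 - tau)) * (L + Lg)).

Definition peq (N m F alpha w : R) (g tau Lg : R) : R :=
  let L := Lpriv N m F alpha g tau Lg in
  (L + Lg) / (L + Lg - alpha * g) * (m * w + alpha * (1 - tau) * w / N).

Definition Profit (N m F alpha w : R) (g tau Lg : R) : R :=
  let L := Lpriv N m F alpha g tau Lg in
  ((L + Lg) * qeq N m F alpha g tau Lg + g)
  * (peq N m F alpha w g tau Lg - m * w) - F * w.

Definition Lambda (N m F alpha : R) (g tau Lg : R) : R :=
  (1 - N * m * qeq N m F alpha g tau Lg) * (N * m / (1 - tau) + 2 * alpha) * g
  - N * (m * g + F).

(* Main.v *)
Require Import Defs.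
From Stdlib Require Import Reals Lra Psatz.
From Coquelicot Require Import Coquelicot.
Open Scope R_scope.

Definition Gf (N m F alpha w g tau x : R) : R :=
  w*alpha/((N*m+alpha*(1-tau))*N) *
  ((1-tau)*(Lpriv N m F alpha g tau x + x - alpha*g) + (N*m+alpha*(1-tau))*g)^2
  / (Lpriv N m F alpha g tau x + x - alpha*g) - F*w.

Lemma uD (N m F alpha g tau x : R) : alpha + (N * m - alpha) * tau <> 0 ->
  (Lpriv N m F alpha g tau x + x - alpha*g) * (alpha + (N * m - alpha) * tau)
  = (N*m+alpha*(1-tau))*x + N*alpha*(1-tau)*F + N*N*m*F + g*(N*N*m*m - alpha*(alpha + (N * m - alpha) * tau)).
Proof. intros. unfold Lpriv. field. auto. Qed.

Lemma prof_eq (N m F alpha w g tau x : R) : 0 < N -> 0 < N*m+alpha*(1-tau) ->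
  Lpriv N m F alpha g tau x + x - alpha*g <> 0 ->
  Lpriv N m F alpha g tau x + x <> 0 ->
  Profit N m F alpha w g tau x = Gf N m F alpha w g tau x.
Proof.
  intros HN Hc Hu HS. unfold Profit, Gf, qeq, peq. cbv zeta.
  set (L := Lpriv N m F alpha g tau x) in *. field. repeat split; lra.
Qed.
Lemma Gder (N m F alpha w g tau x : R) : 0 < N -> 0 < N*m+alpha*(1-tau) ->
  alpha + (N * m - alpha) * tau <> 0 ->
  Lpriv N m F alpha g tau x + x - alpha*g <> 0 ->
  is_derive (Gf N m F alpha w g tau) x
   (w*alpha/((N*m+alpha*(1-tau))*N) *
    (((1-tau)*(Lpriv N m F alpha g tau x + x - alpha*g) + (N*m+alpha*(1-tau))*g)
    *((1-tau)*(Lpriv N m F alpha g tau x + x - alpha*g) - (N*m+alpha*(1-tau))*g))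
    / (Lpriv N m F alpha g tau x + x - alpha*g)^2
    * ((N*m+alpha*(1-tau)) / (alpha + (N * m - alpha) * tau))).
Proof.
  intros HN Hc HD Hu. unfold Gf. unfold Lpriv in *.
  auto_derive. auto.
  field. repeat split; try lra; auto.
  intro E; apply Hu.
  match type of E with ?e = 0 => replace (N * ((1 - tau) * (m * x + alpha * F) + (m * g + F) * m * N) /
    (alpha + (N * m - alpha) * tau) + x - alpha * g) with (e / (alpha + (N * m - alpha) * tau)) by (field; auto) end.
  rewrite E. unfold Rdiv. ring.
Qed.
Lemma lam_eq (N m F alpha g tau Lg : R) : 0 < N*m+alpha*(1-tau) -> tau < 1 ->
  alpha + (N * m - alpha) * tau <> 0 ->
  Lpriv N m F alpha g tau Lg + Lg <> 0 ->
  Lg - Lambda N m F alpha g tau Lg =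
  ((Lpriv N m F alpha g tau Lg + Lg) * (alpha + (N * m - alpha) * tau) + N*m*alpha*(1-tau)*g)
  / ((N*m+alpha*(1-tau)) * (Lpriv N m F alpha g tau Lg + Lg) * (1-tau))
  * ((1-tau)*(Lpriv N m F alpha g tau Lg + Lg - alpha*g) - (N*m+alpha*(1-tau))*g).
Proof.
  intros Hc Ht HD HS. unfold Lambda, qeq. cbv zeta.
  assert (E: Lg = (Lpriv N m F alpha g tau Lg + Lg) * (alpha + (N * m - alpha) * tau) / (N*m+alpha*(1-tau))
     - (N * alpha * (1-tau) * F + N*N*m*(m*g+F)) / (N*m+alpha*(1-tau))).
  { unfold Lpriv. field. split; lra. }
  set (L := Lpriv N m F alpha g tau Lg) in *.
  set (S := L + Lg) in *. rewrite E at 1. clearbody S. clear E. clear L.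
  field. repeat split; lra.
Qed.
Theorem theorem5 (N m F alpha w : R)
  (HN : 0 < N) (Hm : 0 < m) (HF : 0 < F) (Ha : 0 < alpha) (Hw : 0 < w)
  (HNm : N * m > alpha)
  (g tau Lg : R) (Hg : 0 <= g) (Ht0 : 0 < tau) (Ht1 : tau < 1) (HLg : 0 <= Lg) :
  let dPi := Derive (fun x => Profit N m F alpha w g tau x) Lg in
  let Lam := Lambda N m F alpha g tau Lg in
  ex_derive (fun x => Profit N m F alpha w g tau x) Lg /\
  (Lg < Lam -> dPi < 0) /\
  (Lg = Lam -> dPi = 0) /\
  (Lg > Lam -> dPi > 0).
Proof.
  intros dPi Lam.
  assert (Hag : 0 <= alpha*g) by (apply Rmult_le_pos; lra).
  set (D := alpha + (N * m - alpha) * tau).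
  set (c := N*m+alpha*(1-tau)).
  assert (HD : 0 < D) by (unfold D; nra).
  assert (HDl : D < N*m) by (unfold D; nra).
  assert (Hc : 0 < c) by (unfold c; nra).
  assert (Hq : 0 < N*N*m*m - alpha*D) by nra.
  set (K0 := N*alpha*(1-tau)*F + N*N*m*F).
  assert (HK0 : 0 < K0).
  { unfold K0. assert (0 < N*alpha*(1-tau)*F).
    { repeat apply Rmult_lt_0_compat; lra. }
    assert (0 < N*N*m*F) by (repeat apply Rmult_lt_0_compat; lra). lra. }
  set (u := fun x => Lpriv N m F alpha g tau x + x - alpha*g).
  assert (Hupos : forall x, -(K0/(2*c)) < x -> 0 < u x).
  { intros x Hx. unfold u.
    assert (E := uD N m F alpha g tau x ltac:(fold D; lra)). fold D c in E.
    assert (c * x > - (K0/2)).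
    { apply Rmult_lt_compat_l with (r := c) in Hx; auto.
      replace (c * - (K0/(2*c))) with (-(K0/2)) in Hx by (field; lra). lra. }
    assert (0 < (Lpriv N m F alpha g tau x + x - alpha * g) * D).
    { rewrite E. assert (0 <= g*(N*N*m*m - alpha*D)) by (apply Rmult_le_pos; lra). unfold K0 in *; lra. }
    apply (Rmult_lt_reg_r D); lra. }
  set (G' := w*alpha/(c*N) * (((1-tau)*u Lg + c*g)*((1-tau)*u Lg - c*g)) / (u Lg)^2 * (c / D)).
  assert (Hder : is_derive (fun x => Profit N m F alpha w g tau x) Lg G').
  { apply is_derive_ext_loc with (f := Gf N m F alpha w g tau).
    - exists (mkposreal _ (Rdiv_lt_0_compat _ _ HK0 (ltac:(lra) : 0 < 2*c))).
      intros y Hy. simpl in Hy. unfold ball in Hy; simpl in Hy; unfold AbsRing_ball in Hy; simpl in Hy.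
      apply Rabs_lt_between in Hy. unfold minus, plus, opp in Hy; simpl in Hy.
      assert (H1 := Hupos y ltac:(lra)). unfold u in H1.
      symmetry. apply prof_eq; auto. fold c; lra. apply Rgt_not_eq; lra.
    - unfold G', u, c, D. apply Gder; auto. apply Rgt_not_eq; exact HD.
      assert (H1 := Hupos Lg ltac:(assert (0 < K0/(2*c)) by (apply Rdiv_lt_0_compat; lra); lra)).
      unfold u in H1. lra. }
  assert (HdPi : dPi = G') by (apply is_derive_unique; exact Hder).
  assert (HuL : 0 < u Lg) by (apply Hupos; assert (0 < K0/(2*c)) by (apply Rdiv_lt_0_compat; lra); lra).
  assert (HL := lam_eq N m F alpha g tau Lg ltac:(fold c; lra) Ht1 ltac:(fold D; lra) ltac:(unfold u in HuL; nra)).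
  fold Lam D c in HL. fold (u Lg) in HL.
  set (X := (1 - tau) * u Lg - c * g) in *.
  set (P := ((Lpriv N m F alpha g tau Lg + Lg) * D + N * m * alpha * (1 - tau) * g) /
        (c * (Lpriv N m F alpha g tau Lg + Lg) * (1 - tau))) in HL.
  assert (HP : 0 < P).
  { unfold P. unfold u in HuL. apply Rdiv_lt_0_compat.
    assert (0 <= N * m * alpha * (1 - tau) * g).
    { repeat apply Rmult_le_pos; lra. } nra.
    apply Rmult_lt_0_compat; [apply Rmult_lt_0_compat|]; nra. }
  assert (HQ : G' = (w*alpha/(c*N) * ((1-tau)*u Lg + c*g) / (u Lg)^2 * (c / D)) * X).
  { unfold G', X. field. split; lra. }
  assert (HQp : 0 < w*alpha/(c*N) * ((1-tau)*u Lg + c*g) / (u Lg)^2 * (c / D)).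
  { assert (0 < w*alpha/(c*N)) by (apply Rdiv_lt_0_compat; nra).
    assert (0 < (1-tau)*u Lg + c*g) by nra.
    assert (0 < u Lg ^2) by (apply pow_lt; lra).
    assert (0 < c/D) by (apply Rdiv_lt_0_compat; lra).
    apply Rmult_lt_0_compat; [apply Rdiv_lt_0_compat; [apply Rmult_lt_0_compat|]|]; auto. }
  split; [exists G'; exact Hder|].
  rewrite HdPi, HQ.
  split; [|split].
  - intros H. assert (X < 0) by nra. nra.
  - intros H. assert (X = 0) by nra. rewrite H0. ring.
  - intros H. assert (X > 0) by nra. nra.
Qed.
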